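(* Every formula of $\mathcal L^{subj}(\Phi)$ provable in $\mathbf C^{subj}$ is valid in each of the following classes of subjective structures (with the conditional interpreted as described in the context): well-founded preferential structures, preferential structures, $\kappa$-structures, possibility structures, and PPD structures.
   Context: The language $\mathcal{L}^{subj}(\Phi)$ over a first-order vocabulary $\Phi$ is the least set containing the atomic first-order formulas (including equalities) and closed under $\neg,\land,\lor,\Rightarrow$, $\forall x$, $\exists x$, and a binary conditional connective $\hookrightarrow$. $\mathit{true},\mathit{false}$ are a fixed tautology and its negation; $N\phi:=\neg\phi\hookrightarrow\mathit{false}$. Each structure below has the form $(\mathit{Dom},W,X,\pi)$ with $\mathit{Dom}$ a nonempty set, $W$ a set of worlds, $\pi(w)$ an interpretation of $\Phi$ over $\mathit{Dom}$ for each $w\in W$, and $X$ the ''measure'' below. Valuations map variables to $\mathit{Dom}$; atomic formulas, Boolean connectives and quantifiers are evaluated at $(w,v)$ as in first-order logic in $(\mathit{Dom},\pi(w))$ (with $\forall x\phi$ true iff $\phi$ holds for all valuations differing from $v$ at most on $x$), and $[\![\phi]\!]_v=\{w: \phi \text{ holds at }(w,v)\}$. The conditional $\phi\hookrightarrow\psi$ holds at $(w,v)$ as follows: - Possibility structure: $X=\mathrm{Poss}:2^W\to[0,1]$ with $\mathrm{Poss}(W)=1$, $\mathrm{Poss}(\emptyset)=0$, $\mathrm{Poss}(A)=\sup_{w\in A}\mathrm{Poss}(\{w\})$; condition: $\mathrm{Poss}([\![\phi]\!]_v)=0$ or $\mathrm{Poss}([\![\phi\land\psi]\!]_v)>\mathrm{Poss}([\![\phi\land\neg\psi]\!]_v)$.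 - $\kappa$-structure: $X=\kappa:2^W\to\mathbb N\cup\{\infty\}$ with $\kappa(W)=0$, $\kappa(\emptyset)=\infty$, $\kappa(A)=\min_{w\in A}\kappa(\{w\})$; condition: $\kappa([\![\phi]\!]_v)=\infty$ or $\kappa([\![\phi\land\psi]\!]_v)<\kappa([\![\phi\land\neg\psi]\!]_v)$. - Preferential structure: $X=\prec$ a strict partial order on $W$ ($w\prec w'$: $w$ is preferred to $w'$; $w\preceq w'$ means $w\prec w'$ or $w=w'$); condition: for every $w_1\in[\![\phi]\!]_v$ there is $w_2\preceq w_1$ with $w_2\in[\![\phi\land\psi]\!]_v$ such that every $w_3\prec w_2$ lies in $[\![\phi\Rightarrow\psi]\!]_v$. It is well-founded if there is no infinite sequence $\cdots\prec w_2\prec w_1$. - PPD structure: $X=(\Pr_i)_{i\ge1}$ a sequence of probability measures on an algebra of subsets of $W$ containing all sets $[\![\phi]\!]_v$; condition: $\lim_{i\to\infty}\Pr_i([\![\psi]\!]_v\mid[\![\phi]\!]_v)=1$, where the conditional probability is taken to be $1$ when $\Pr_i([\![\phi]\!]_v)=0$. A formula is valid in a class if it holds at every world and valuation of every structure in it. The axiom system $\mathbf C^{subj}$ consists of all generalizations (formulas $\forall x_1\ldots\forall x_n\psi$, $n\ge 0$) of the following axioms, together with the rules below ($x,y$ variables, $t$ a term): C0: all instances of propositional tautologies; C1: $\phi\hookrightarrow\phi$; C2: $((\phi\hookrightarrow\psi_1)\land(\phi\hookrightarrow\psi_2))\Rightarrow(\phi\hookrightarrow(\psi_1\land\psi_2))$;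 C3: $((\phi_1\hookrightarrow\psi)\land(\phi_2\hookrightarrow\psi))\Rightarrow((\phi_1\lor\phi_2)\hookrightarrow\psi)$; C4: $((\phi_1\hookrightarrow\phi_2)\land(\phi_1\hookrightarrow\psi))\Rightarrow((\phi_1\land\phi_2)\hookrightarrow\psi)$; C5: $[(\phi\hookrightarrow\psi)\Rightarrow N(\phi\hookrightarrow\psi)]\land[\neg(\phi\hookrightarrow\psi)\Rightarrow N\neg(\phi\hookrightarrow\psi)]$; F1: $\forall x\phi\Rightarrow\phi[x/t]$ where $t$ is substitutable for $x$ in $\phi$: no variable of $t$ becomes bound after substitution, and if $\phi$ contains $\hookrightarrow$ then $t$ must be a variable; F2: $\forall x(\phi\Rightarrow\psi)\Rightarrow(\forall x\phi\Rightarrow\forall x\psi)$; F3: $\phi\Rightarrow\forall x\phi$ if $x$ is not free in $\phi$; F4: $x=x$; F5: $x=y\Rightarrow(\phi\Rightarrow\phi')$ for $\phi$ quantifier-free and $\hookrightarrow$-free, $\phi'$ obtained by replacing zero or more occurrences of $x$ by $y$; F6: $x=y\Rightarrow N(x=y)$; F7: $x\ne y\Rightarrow N(x\ne y)$. Rules: MP: from $\phi$ and $\phi\Rightarrow\psi$ infer $\psi$; R1: from $\phi_1\Leftrightarrow\phi_2$ infer $(\phi_1\hookrightarrow\psi)\Leftrightarrow(\phi_2\hookrightarrow\psi)$; R2: from $\psi_1\Rightarrow\psi_2$ infer $(\phi\hookrightarrow\psi_1)\Rightarrow(\phi\hookrightarrow\psi_2)$. *)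

(* Defs.v *)
From Stdlib Require Import Reals Arith List.
From Stdlib Require Vectors.Fin.
Set Implicit Arguments.

Record vocab := {
  fsym : Type; far : fsym -> nat;
  psym : Type; par : psym -> nat }.

Section Logic.
Variable S : vocab.

Inductive term : Type :=
| Var : nat -> term
| App : forall f : fsym S, (Fin.t (far S f) -> term) -> term.

Inductive form : Type :=
| Atom : forall p : psym S, (Fin.t (par S p) -> term) -> form
| Eq   : term -> term -> form
| Neg  : form -> form
| And  : form -> form -> form
| Or   : form -> form -> form
| Imp  : form -> form -> form
| All  : nat -> form -> form
| Ex   : nat -> form -> form
| Cond : form -> form -> form.

Definition Iff (a b : form) : form := And (Imp a b) (Imp b a).
Definition ftrue : form := Imp (Eq (Var 0) (Var 0)) (Eq (Var 0) (Var 0)).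
Definition ffalse : form := Neg ftrue.
Definition Nec (a : form) : form := Cond (Neg a) ffalse.

Inductive occurs (x : nat) : term -> Prop :=
| occ_var : occurs x (Var x)
| occ_app : forall f a (i : Fin.t (far S f)), occurs x (a i) -> occurs x (App f a).

Fixpoint free (x : nat) (a : form) : Prop :=
  match a with
  | Atom p ts => exists i, occurs x (ts i)
  | Eq t u => occurs x t \/ occurs x u
  | Neg b => free x b
  | And b c | Or b c | Imp b c | Cond b c => free x b \/ free x c
  | All y b | Ex y b => y <> x /\ free x b
  end.

Fixpoint has_cond (a : form) : Prop :=
  match a with
  | Atom _ _ | Eq _ _ => False
  | Neg b => has_cond b
  | And b c | Or b c | Imp b c => has_cond b \/ has_cond c
  | All _ b | Ex _ b => has_cond b
  | Cond _ _ => True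
  end.

Fixpoint qf_cf (a : form) : Prop :=
  match a with
  | Atom _ _ | Eq _ _ => True
  | Neg b => qf_cf b
  | And b c | Or b c | Imp b c => qf_cf b /\ qf_cf c
  | All _ _ | Ex _ _ | Cond _ _ => False
  end.

Fixpoint tsubst (x : nat) (t u : term) : term :=
  match u with
  | Var y => if Nat.eqb y x then t else Var y
  | App f ts => App f (fun i => tsubst x t (ts i))
  end.

Fixpoint fsubst (x : nat) (t : term) (a : form) : form :=
  match a with
  | Atom p ts => Atom p (fun i => tsubst x t (ts i))
  | Eq u1 u2 => Eq (tsubst x t u1) (tsubst x t u2)
  | Neg b => Neg (fsubst x t b)
  | And b c => And (fsubst x t b) (fsubst x t c)
  | Or b c => Or (fsubst x t b) (fsubst x t c)
  | Imp b c => Imp (fsubst x t b) (fsubst x t c)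
  | All y b => if Nat.eqb y x then All y b else All y (fsubst x t b)
  | Ex y b => if Nat.eqb y x then Ex y b else Ex y (fsubst x t b)
  | Cond b c => Cond (fsubst x t b) (fsubst x t c)
  end.

Fixpoint free_for (t : term) (x : nat) (a : form) : Prop :=
  match a with
  | Atom _ _ | Eq _ _ => True
  | Neg b => free_for t x b
  | And b c | Or b c | Imp b c | Cond b c => free_for t x b /\ free_for t x c
  | All y b | Ex y b => ~ free x a \/ (~ occurs y t /\ free_for t x b)
  end.

Definition substitutable (t : term) (x : nat) (a : form) : Prop :=
  free_for t x a /\ (has_cond a -> exists z, t = Var z).

Inductive trepl (x y : nat) : term -> term -> Prop :=
| tr_keep : forall z, trepl x y (Var z) (Var z)
| tr_swap : trepl x y (Var x) (Var y)
| tr_app : forall f a b, (forall i, trepl x y (a i) (b i)) -> trepl x y (App f a) (App f b).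

Inductive frepl (x y : nat) : form -> form -> Prop :=
| fr_atom : forall p a b, (forall i, trepl x y (a i) (b i)) -> frepl x y (Atom p a) (Atom p b)
| fr_eq : forall t1 t2 u1 u2, trepl x y t1 u1 -> trepl x y t2 u2 -> frepl x y (Eq t1 t2) (Eq u1 u2)
| fr_neg : forall a b, frepl x y a b -> frepl x y (Neg a) (Neg b)
| fr_and : forall a1 a2 b1 b2, frepl x y a1 b1 -> frepl x y a2 b2 -> frepl x y (And a1 a2) (And b1 b2)
| fr_or : forall a1 a2 b1 b2, frepl x y a1 b1 -> frepl x y a2 b2 -> frepl x y (Or a1 a2) (Or b1 b2)
| fr_imp : forall a1 a2 b1 b2, frepl x y a1 b1 -> frepl x y a2 b2 -> frepl x y (Imp a1 a2) (Imp b1 b2).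

Inductive pform : Type :=
| PV : nat -> pform
| PNeg : pform -> pform
| PAnd : pform -> pform -> pform
| POr : pform -> pform -> pform
| PImp : pform -> pform -> pform.

Fixpoint peval (v : nat -> bool) (p : pform) : bool :=
  match p with
  | PV n => v n
  | PNeg q => negb (peval v q)
  | PAnd q r => andb (peval v q) (peval v r)
  | POr q r => orb (peval v q) (peval v r)
  | PImp q r => implb (peval v q) (peval v r)
  end.

Definition ptaut (p : pform) : Prop := forall v, peval v p = true.

Fixpoint pinst (s : nat -> form) (p : pform) : form :=
  match p with
  | PV n => s n
  | PNeg q => Neg (pinst s q)
  | PAnd q r => And (pinst s q) (pinst s r)
  | POr q r => Or (pinst s q) (pinst s r)
  | PImp q r => Imp (pinst s q) (pinst s r)
  end.

Inductive axiom : form -> Prop :=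
| ax_C0 : forall p s, ptaut p -> axiom (pinst s p)
| ax_C1 : forall a, axiom (Cond a a)
| ax_C2 : forall a b1 b2,
    axiom (Imp (And (Cond a b1) (Cond a b2)) (Cond a (And b1 b2)))
| ax_C3 : forall a1 a2 b,
    axiom (Imp (And (Cond a1 b) (Cond a2 b)) (Cond (Or a1 a2) b))
| ax_C4 : forall a1 a2 b,
    axiom (Imp (And (Cond a1 a2) (Cond a1 b)) (Cond (And a1 a2) b))
| ax_C5 : forall a b,
    axiom (And (Imp (Cond a b) (Nec (Cond a b)))
               (Imp (Neg (Cond a b)) (Nec (Neg (Cond a b)))))
| ax_F1 : forall x a t, substitutable t x a -> axiom (Imp (All x a) (fsubst x t a))
| ax_F2 : forall x a b, axiom (Imp (All x (Imp a b)) (Imp (All x a) (All x b)))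
| ax_F3 : forall x a, ~ free x a -> axiom (Imp a (All x a))
| ax_F4 : forall x, axiom (Eq (Var x) (Var x))
| ax_F5 : forall x y a a', qf_cf a -> frepl x y a a' ->
    axiom (Imp (Eq (Var x) (Var y)) (Imp a a'))
| ax_F6 : forall x y, axiom (Imp (Eq (Var x) (Var y)) (Nec (Eq (Var x) (Var y))))
| ax_F7 : forall x y,
    axiom (Imp (Neg (Eq (Var x) (Var y))) (Nec (Neg (Eq (Var x) (Var y))))).

Fixpoint gen (xs : list nat) (a : form) : form :=
  match xs with
  | nil => a
  | x :: xs' => All x (gen xs' a)
  end.

Inductive provable : form -> Prop :=
| pr_ax : forall xs a, axiom a -> provable (gen xs a)
| pr_MP : forall a b, provable a -> provable (Imp a b) -> provable b
| pr_R1 : forall a1 a2 b, provable (Iff a1 a2) -> provable (Iff (Cond a1 b) (Cond a2 b))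
| pr_R2 : forall a b1 b2, provable (Imp b1 b2) -> provable (Imp (Cond a b1) (Cond a b2)).

Record interp (D : Type) := {
  ifun : forall f : fsym S, (Fin.t (far S f) -> D) -> D;
  ipred : forall p : psym S, (Fin.t (par S p) -> D) -> Prop }.

Fixpoint teval (D : Type) (I : interp D) (v : nat -> D) (t : term) : D :=
  match t with
  | Var x => v x
  | App f ts => ifun I f (fun i => teval I v (ts i))
  end.

Definition upd (D : Type) (v : nat -> D) (x : nat) (d : D) : nat -> D :=
  fun y => if Nat.eqb y x then d else v y.

(* generic satisfaction; [cnd A B] is the truth condition of phi ↪ psi where
   A = [[phi]]_v and B = [[psi]]_v *)
Fixpoint sat (D W : Type) (pi : W -> interp D)
    (cnd : (W -> Prop) -> (W -> Prop) -> Prop) (a : form) (w : W) (v : nat -> D)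
    {struct a} : Prop :=
  match a with
  | Atom p ts => ipred (pi w) p (fun i => teval (pi w) v (ts i))
  | Eq t u => teval (pi w) v t = teval (pi w) v u
  | Neg b => ~ sat pi cnd b w v
  | And b c => sat pi cnd b w v /\ sat pi cnd c w v
  | Or b c => sat pi cnd b w v \/ sat pi cnd c w v
  | Imp b c => sat pi cnd b w v -> sat pi cnd c w v
  | All x b => forall d, sat pi cnd b w (upd v x d)
  | Ex x b => exists d, sat pi cnd b w (upd v x d)
  | Cond b c => cnd (fun w' => sat pi cnd b w' v) (fun w' => sat pi cnd c w' v)
  end.

End Logic.

Section Measures.
Variable W : Type.
Definition setT : W -> Prop := fun _ => True.
Definition sing (w : W) : W -> Prop := fun w' => w' = w.
Definition isempty (A : W -> Prop) : Prop := forall w, ~ A w.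

Definition is_poss (Poss : (W -> Prop) -> R) : Prop :=
  (forall A, 0 <= Poss A <= 1)%R /\
  Poss setT = 1%R /\
  (forall A, isempty A -> Poss A = 0%R) /\
  (forall A, (exists w, A w) ->
     is_lub (fun r => exists w, A w /\ r = Poss (sing w)) (Poss A)).

Definition poss_cond (Poss : (W -> Prop) -> R) (A B : W -> Prop) : Prop :=
  Poss A = 0%R \/
  (Poss (fun w => A w /\ ~ B w) < Poss (fun w => A w /\ B w))%R.

(** kappa-structures: values in nat ∪ {oo}, with None = oo *)
Definition kle (a b : option nat) : Prop :=
  match a, b with
  | _, None => True
  | None, Some _ => False
  | Some m, Some n => m <= n
  end.
Definition klt (a b : option nat) : Prop :=
  match a, b with
  | None, _ => False
  | Some _, None => True
  | Some m, Some n => m < n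
  end.

Definition is_kappa (k : (W -> Prop) -> option nat) : Prop :=
  k setT = Some 0 /\
  (forall A, isempty A -> k A = None) /\
  (forall A, (exists w, A w) ->
     (exists w, A w /\ k A = k (sing w)) /\ (forall w, A w -> kle (k A) (k (sing w)))).

Definition kappa_cond (k : (W -> Prop) -> option nat) (A B : W -> Prop) : Prop :=
  k A = None \/ klt (k (fun w => A w /\ B w)) (k (fun w => A w /\ ~ B w)).

Definition strict_po (prec : W -> W -> Prop) : Prop :=
  (forall w, ~ prec w w) /\ (forall a b c, prec a b -> prec b c -> prec a c).

Definition well_founded_pref (prec : W -> W -> Prop) : Prop :=
  ~ exists s : nat -> W, forall n, prec (s (S n)) (s n).

Definition pref_cond (prec : W -> W -> Prop) (A B : W -> Prop) : Prop :=
  forall w1, A w1 ->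
    exists w2, (prec w2 w1 \/ w2 = w1) /\ (A w2 /\ B w2) /\
      (forall w3, prec w3 w2 -> (A w3 -> B w3)).

Definition is_algebra (Alg : (W -> Prop) -> Prop) : Prop :=
  Alg setT /\ (forall A, Alg A -> Alg (fun w => ~ A w)) /\
  (forall A B, Alg A -> Alg B -> Alg (fun w => A w \/ B w)).

Definition is_prob_on (Alg : (W -> Prop) -> Prop) (P : (W -> Prop) -> R) : Prop :=
  (forall A, Alg A -> 0 <= P A)%R /\
  P setT = 1%R /\
  (forall A : nat -> W -> Prop, (forall n, Alg (A n)) ->
     (forall m n w, m <> n -> A m w -> A n w -> False) ->
     Alg (fun w => exists n, A n w) ->
     infinite_sum (fun n => P (A n)) (P (fun w => exists n, A n w))).

(* Pr(B | A), taken to be 1 when Pr(A) = 0 *)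
Definition cprob (P : (W -> Prop) -> R) (B A : W -> Prop) : R :=
  if Req_EM_T (P A) 0%R then 1%R else (P (fun w => A w /\ B w) / P A)%R.

Definition ppd_cond (Pr : nat -> (W -> Prop) -> R) (A B : W -> Prop) : Prop :=
  Un_cv (fun i => cprob (Pr i) B A) 1%R.
End Measures.

Section Validity.
Variable S : vocab.

Definition valid_pref (a : form S) : Prop :=
  forall (D W : Type) (pi : W -> interp S D) (prec : W -> W -> Prop),
    inhabited D -> strict_po prec ->
    forall w v, sat pi (pref_cond prec) a w v.

Definition valid_wf_pref (a : form S) : Prop :=
  forall (D W : Type) (pi : W -> interp S D) (prec : W -> W -> Prop),
    inhabited D -> strict_po prec -> well_founded_pref prec ->
    forall w v, sat pi (pref_cond prec) a w v.

Definition valid_kappa (a : form S) : Prop :=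
  forall (D W : Type) (pi : W -> interp S D) (k : (W -> Prop) -> option nat),
    inhabited D -> is_kappa k ->
    forall w v, sat pi (kappa_cond k) a w v.

Definition valid_poss (a : form S) : Prop :=
  forall (D W : Type) (pi : W -> interp S D) (Poss : (W -> Prop) -> R),
    inhabited D -> is_poss Poss ->
    forall w v, sat pi (poss_cond Poss) a w v.

Definition valid_ppd (a : form S) : Prop :=
  forall (D W : Type) (pi : W -> interp S D) (Alg : (W -> Prop) -> Prop)
         (Pr : nat -> (W -> Prop) -> R),
    inhabited D -> is_algebra Alg -> (forall i, is_prob_on Alg (Pr i)) ->
    (forall (b : form S) (v : nat -> D), Alg (fun w => sat pi (ppd_cond Pr) b w v)) ->
    forall w v, sat pi (ppd_cond Pr) a w v.
End Validity.

(* Main.v *)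
Require Import Defs.
From Stdlib Require Import Reals Lra Lia Arith List Classical ClassicalEpsilon FunctionalExtensionality PropExtensionality.

Lemma pext {W : Type} {A B : W -> Prop} : (forall w, A w <-> B w) -> A = B.
Proof. intro H. apply functional_extensionality; intro w. apply propositional_extensionality; auto. Qed.

Section Syn.
Variables (S : vocab) (D W : Type) (pi : W -> interp S D)
  (cnd : (W -> Prop) -> (W -> Prop) -> Prop).

Lemma teval_coinc (I : interp S D) (t : term S) (v v' : nat -> D) :
  (forall x, occurs x t -> v x = v' x) -> teval I v t = teval I v' t.
Proof.
  revert v v'; induction t as [n|f ts IH]; intros v v' H; simpl.
  - apply H; constructor.
  - f_equal. apply functional_extensionality; intro i. apply IH.
    intros x Hx. apply H. econstructor; eauto.
Qed.

Lemma teval_subst (I : interp S D) x t (u : term S) : forall v,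
  teval I v (tsubst x t u) = teval I (upd v x (teval I v t)) u.
Proof.
  induction u as [n|f ts IH]; intros v; simpl.
  - unfold upd. destruct (Nat.eqb n x); reflexivity.
  - f_equal. apply functional_extensionality; intro i. apply IH.
Qed.

Lemma tsubst_nocc x t (u : term S) : ~ occurs x u -> tsubst x t u = u.
Proof.
  induction u as [n|f ts IH]; intros H; simpl.
  - destruct (Nat.eqb n x) eqn:E; auto. apply Nat.eqb_eq in E; subst. exfalso; apply H; constructor.
  - f_equal. apply functional_extensionality; intro i. apply IH.
    intro Hc; apply H; econstructor; eauto.
Qed.

Lemma sat_coinc (a : form S) : forall v v',
  (forall x, free x a -> v x = v' x) -> forall w, sat pi cnd a w v <-> sat pi cnd a w v'.
Proof.
  induction a; intros v v' H w; simpl in *.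
  - replace (fun i => teval (pi w) v (t i)) with (fun i => teval (pi w) v' (t i)); [tauto|].
    apply functional_extensionality; intro i. symmetry; apply teval_coinc.
    intros x Hx; apply H; eauto.
  - rewrite (teval_coinc (pi w) t v v'), (teval_coinc (pi w) t0 v v'); [tauto| |];
    intros; apply H; auto.
  - rewrite (IHa v v'); tauto.
  - rewrite (IHa1 v v'), (IHa2 v v'); try tauto; intros; apply H; auto.
  - rewrite (IHa1 v v'), (IHa2 v v'); try tauto; intros; apply H; auto.
  - rewrite (IHa1 v v'), (IHa2 v v'); try tauto; intros; apply H; auto.
  - split; intros Hd d; [rewrite <- (IHa (upd v n d))|rewrite (IHa (upd v n d) (upd v' n d))]; auto;
    intros x Hx; unfold upd; destruct (Nat.eqb x n) eqn:E; auto;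
    apply H; split; auto; intro; subst; rewrite Nat.eqb_refl in E; discriminate.
  - split; intros [d Hd]; exists d; [rewrite <- (IHa (upd v n d))|rewrite (IHa (upd v n d) (upd v' n d))]; auto;
    intros x Hx; unfold upd; destruct (Nat.eqb x n) eqn:E; auto;
    apply H; split; auto; intro; subst; rewrite Nat.eqb_refl in E; discriminate.
  - rewrite (pext (A := fun w' => sat pi cnd a1 w' v) (B := fun w' => sat pi cnd a1 w' v')).
    rewrite (pext (A := fun w' => sat pi cnd a2 w' v) (B := fun w' => sat pi cnd a2 w' v')).
    tauto.
    all: intro w'; apply IHa1 || apply IHa2; intros; apply H; auto.
Qed.
End Syn.

Section Syn2.
Variables (S : vocab) (D W : Type) (pi : W -> interp S D)
  (cnd : (W -> Prop) -> (W -> Prop) -> Prop).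

Lemma upd_eqb_false (v : nat -> D) x y d : x <> y -> upd v y d x = v x.
Proof. intro H. unfold upd. destruct (Nat.eqb x y) eqn:E; auto. apply Nat.eqb_eq in E; contradiction. Qed.

Lemma upd_same (v : nat -> D) x d : upd v x d x = d.
Proof. unfold upd. rewrite Nat.eqb_refl; auto. Qed.

Lemma upd_upd (v : nat -> D) x e d : upd (upd v x e) x d = upd v x d.
Proof. apply functional_extensionality; intro y. unfold upd. destruct (Nat.eqb y x); auto. Qed.

Lemma sat_nofree x (t : term S) (a : form S) : ~ free x a -> forall v w,
  sat pi cnd (fsubst x t a) w v <-> sat pi cnd a w v.
Proof.
  induction a; intros Hf v w; simpl in *.
  - replace (fun i => teval (pi w) v (tsubst x t (t0 i))) with (fun i => teval (pi w) v (t0 i)); [tauto|].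
    apply functional_extensionality; intro i. rewrite tsubst_nocc; auto. intro; apply Hf; eauto.
  - rewrite !tsubst_nocc; try tauto; intro; apply Hf; auto.
  - rewrite IHa; tauto.
  - rewrite IHa1, IHa2; tauto.
  - rewrite IHa1, IHa2; tauto.
  - rewrite IHa1, IHa2; tauto.
  - destruct (Nat.eqb n x) eqn:E; simpl; [tauto|].
    assert (Hb : ~ free x a). { intro Hc; apply Hf; split; auto. intro; subst; rewrite Nat.eqb_refl in E; discriminate. }
    split; intros H d; [rewrite <- IHa|rewrite IHa]; auto.
  - destruct (Nat.eqb n x) eqn:E; simpl; [tauto|].
    assert (Hb : ~ free x a). { intro Hc; apply Hf; split; auto. intro; subst; rewrite Nat.eqb_refl in E; discriminate. }
    split; intros [d H]; exists d; [rewrite <- IHa|rewrite IHa]; auto.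
  - rewrite (pext (A := fun w' => sat pi cnd (fsubst x t a1) w' v) (B := fun w' => sat pi cnd a1 w' v)).
    rewrite (pext (A := fun w' => sat pi cnd (fsubst x t a2) w' v) (B := fun w' => sat pi cnd a2 w' v)).
    tauto.
    all: intro w'; apply IHa1 || apply IHa2; tauto.
Qed.

Lemma sat_subst x (t : term S) (a : form S) : free_for t x a -> (has_cond a -> exists z, t = Var S z) ->
  forall v w, sat pi cnd (fsubst x t a) w v <-> sat pi cnd a w (upd v x (teval (pi w) v t)).
Proof.
  induction a; intros Hff Hc v w; simpl in *.
  - replace (fun i => teval (pi w) v (tsubst x t (t0 i))) with (fun i => teval (pi w) (upd v x (teval (pi w) v t)) (t0 i)); [tauto|].
    apply functional_extensionality; intro i. rewrite teval_subst; auto.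
  - rewrite !teval_subst; tauto.
  - rewrite IHa; tauto.
  - destruct Hff. rewrite IHa1, IHa2; tauto.
  - destruct Hff. rewrite IHa1, IHa2; tauto.
  - destruct Hff. rewrite IHa1, IHa2; tauto.
  - destruct (Nat.eqb n x) eqn:E; simpl.
    + apply Nat.eqb_eq in E; subst. setoid_rewrite upd_upd. tauto.
    + assert (Hnx : n <> x). { intro; subst; rewrite Nat.eqb_refl in E; discriminate. }
      destruct Hff as [Hnf | [Hno Hff]].
      * assert (Hb : ~ free x a) by (intro Hc'; apply Hnf; split; auto).
        split; intros H d.
        -- specialize (H d). rewrite sat_nofree in H; auto.
           apply (sat_coinc _ _ _ pi cnd a (upd v n d)); auto. intros y Hy. unfold upd.
           destruct (Nat.eqb y n); auto. destruct (Nat.eqb y x) eqn:E2; auto.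
           apply Nat.eqb_eq in E2; subst; contradiction.
        -- rewrite sat_nofree; auto. specialize (H d).
           apply (sat_coinc _ _ _ pi cnd a _ (upd v n d)) in H; auto. intros y Hy. unfold upd.
           destruct (Nat.eqb y n); auto. destruct (Nat.eqb y x) eqn:E2; auto.
           apply Nat.eqb_eq in E2; subst; contradiction.
      * split; intros H d; specialize (H d).
        -- rewrite IHa in H; auto.
           rewrite (teval_coinc _ _ (pi w) t (upd v n d) v) in H.
           2: { intros y Hy. apply upd_eqb_false. intro; subst; contradiction. }
           revert H; apply sat_coinc. intros y _. unfold upd.
           destruct (Nat.eqb y n) eqn:E1, (Nat.eqb y x) eqn:E2; auto.
           apply Nat.eqb_eq in E1, E2; subst; contradiction.
        -- rewrite IHa; auto.
           rewrite (teval_coinc _ _ (pi w) t (upd v n d) v).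
           2: { intros y Hy. apply upd_eqb_false. intro; subst; contradiction. }
           revert H; apply sat_coinc. intros y _. unfold upd.
           destruct (Nat.eqb y n) eqn:E1, (Nat.eqb y x) eqn:E2; auto.
           apply Nat.eqb_eq in E1, E2; subst; contradiction.
  - destruct (Nat.eqb n x) eqn:E; simpl.
    + apply Nat.eqb_eq in E; subst. setoid_rewrite upd_upd. tauto.
    + assert (Hnx : n <> x). { intro; subst; rewrite Nat.eqb_refl in E; discriminate. }
      destruct Hff as [Hnf | [Hno Hff]].
      * assert (Hb : ~ free x a) by (intro Hc'; apply Hnf; split; auto).
        split; intros [d H]; exists d.
        -- rewrite sat_nofree in H; auto.
           apply (sat_coinc _ _ _ pi cnd a (upd v n d)); auto. intros y Hy. unfold upd.
           destruct (Nat.eqb y n); auto. destruct (Nat.eqb y x) eqn:E2; auto.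
           apply Nat.eqb_eq in E2; subst; contradiction.
        -- rewrite sat_nofree; auto.
           apply (sat_coinc _ _ _ pi cnd a _ (upd v n d)) in H; auto. intros y Hy. unfold upd.
           destruct (Nat.eqb y n); auto. destruct (Nat.eqb y x) eqn:E2; auto.
           apply Nat.eqb_eq in E2; subst; contradiction.
      * split; intros [d H]; exists d.
        -- rewrite IHa in H; auto.
           rewrite (teval_coinc _ _ (pi w) t (upd v n d) v) in H.
           2: { intros y Hy. apply upd_eqb_false. intro; subst; contradiction. }
           revert H; apply sat_coinc. intros y _. unfold upd.
           destruct (Nat.eqb y n) eqn:E1, (Nat.eqb y x) eqn:E2; auto.
           apply Nat.eqb_eq in E1, E2; subst; contradiction.
        -- rewrite IHa; auto.
           rewrite (teval_coinc _ _ (pi w) t (upd v n d) v).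
           2: { intros y Hy. apply upd_eqb_false. intro; subst; contradiction. }
           revert H; apply sat_coinc. intros y _. unfold upd.
           destruct (Nat.eqb y n) eqn:E1, (Nat.eqb y x) eqn:E2; auto.
           apply Nat.eqb_eq in E1, E2; subst; contradiction.
  - destruct (Hc I) as [z Hz]; subst t.
    rewrite (pext (A := fun w' => sat pi cnd (fsubst x (Var S z) a1) w' v) (B := fun w' => sat pi cnd a1 w' (upd v x (v z)))).
    rewrite (pext (A := fun w' => sat pi cnd (fsubst x (Var S z) a2) w' v) (B := fun w' => sat pi cnd a2 w' (upd v x (v z)))).
    tauto.
    all: destruct Hff; intro w'; rewrite IHa1 || rewrite IHa2; simpl; eauto; tauto.
Qed.
End Syn2.

Section Syn3.
Variables (S : vocab) (D W : Type) (pi : W -> interp S D)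
  (cnd : (W -> Prop) -> (W -> Prop) -> Prop).

Lemma trepl_eval (I : interp S D) (v : nat -> D) x y t t' :
  v x = v y -> trepl x y t t' -> teval I v t = teval I v t'.
Proof.
  intros Hxy H. induction H; simpl; auto.
  f_equal. apply functional_extensionality; auto.
Qed.

Lemma frepl_sat v w x y a a' : v x = v y -> frepl x y a a' ->
  (sat pi cnd a w v <-> sat pi cnd a' w v).
Proof.
  intros Hxy H. induction H as [p a0 b0 Hab| | | | | ]; simpl.
  - replace (fun i => teval (pi w) v (b0 i)) with (fun i => teval (pi w) v (a0 i)); [tauto|].
    apply functional_extensionality; intro i. eapply trepl_eval; [exact Hxy|]. apply Hab.
  - rewrite (trepl_eval (pi w) v x y t1 u1), (trepl_eval (pi w) v x y t2 u2); auto; tauto.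
  - tauto.
  - tauto.
  - tauto.
  - tauto.
Qed.

Lemma pinst_sat s w v (p : pform) :
  let vb := fun n => if excluded_middle_informative (sat pi cnd (s n) w v) then true else false in
  sat pi cnd (pinst s p) w v <-> peval vb p = true.
Proof.
  intro vb. induction p; simpl.
  - unfold vb. destruct excluded_middle_informative; split; auto; try discriminate; tauto.
  - rewrite IHp. destruct (peval vb p); simpl; split; intros H; try discriminate; auto; exfalso; auto.
  - rewrite IHp1, IHp2. destruct (peval vb p1), (peval vb p2); simpl; intuition discriminate.
  - rewrite IHp1, IHp2. destruct (peval vb p1), (peval vb p2); simpl; intuition discriminate.
  - rewrite IHp1, IHp2. destruct (peval vb p1), (peval vb p2); simpl; intuition discriminate.
Qed.
End Syn3.

Section Sound.
Variables (S : vocab) (D W : Type) (pi : W -> interp S D)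
  (cnd : (W -> Prop) -> (W -> Prop) -> Prop) (Good : (W -> Prop) -> Prop).
Hypothesis hGood : forall (b : form S) v, Good (fun w => sat pi cnd b w v).
Hypothesis c_empty : forall A B, Good A -> Good B -> isempty A -> cnd A B.
Hypothesis c_1 : forall A, Good A -> cnd A A.
Hypothesis c_2 : forall A B1 B2, Good A -> Good B1 -> Good B2 -> cnd A B1 -> cnd A B2 ->
  cnd A (fun w => B1 w /\ B2 w).
Hypothesis c_3 : forall A1 A2 B, Good A1 -> Good A2 -> Good B -> cnd A1 B -> cnd A2 B ->
  cnd (fun w => A1 w \/ A2 w) B.
Hypothesis c_4 : forall A B C, Good A -> Good B -> Good C -> cnd A B -> cnd A C ->
  cnd (fun w => A w /\ B w) C.
Hypothesis c_mono : forall A B1 B2, Good A -> Good B1 -> Good B2 ->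
  (forall w, B1 w -> B2 w) -> cnd A B1 -> cnd A B2.

Lemma nec_sound (b : form S) w v : (forall w', sat pi cnd b w' v) -> sat pi cnd (Nec b) w v.
Proof.
  intros H. simpl. apply c_empty.
  - exact (hGood (Neg b) v).
  - exact (hGood (ffalse S) v).
  - intros w' Hw'. apply Hw', H.
Qed.

Lemma axiom_sound (a : form S) : axiom a -> forall w v, sat pi cnd a w v.
Proof.
  intros Ha. destruct Ha; intros w v.
  - apply (pinst_sat S D W pi cnd s w v p). apply H.
  - simpl. apply c_1. exact (hGood a v).
  - simpl. intros [H1 H2]. apply c_2; auto; exact (hGood _ v).
  - simpl. intros [H1 H2]. apply c_3; auto; exact (hGood _ v).
  - simpl. intros [H1 H2]. apply c_4; auto; exact (hGood _ v).
  - split; intros H; apply nec_sound; intros w'; exact H.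
  - simpl. intros Hall. destruct H as [Hff Hc].
    apply (sat_subst S D W pi cnd x t a Hff Hc v w). apply Hall.
  - simpl. intros H1 H2 d. apply H1, H2.
  - simpl. intros Ha d. apply (sat_coinc S D W pi cnd a v); auto.
    intros y Hy. unfold upd. destruct (Nat.eqb y x) eqn:E; auto.
    apply Nat.eqb_eq in E; subst; contradiction.
  - simpl. reflexivity.
  - simpl. intros Hxy. apply (frepl_sat S D W pi cnd v w x y a a'); auto.
  - intros Hxy. apply nec_sound. intros w'. exact Hxy.
  - intros Hxy. apply nec_sound. intros w'. exact Hxy.
Qed.

Lemma gen_sound xs (a : form S) : (forall w v, sat pi cnd a w v) -> forall w v, sat pi cnd (gen xs a) w v.
Proof.
  intros H. induction xs; simpl; auto.
Qed.

Lemma provable_sound (a : form S) : provable a -> forall w v, sat pi cnd a w v.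
Proof.
  intros Hp. induction Hp; intros w v.
  - apply gen_sound, axiom_sound; auto.
  - simpl in IHHp2. apply IHHp2, IHHp1.
  - simpl in *. assert (E : (fun w' => sat pi cnd a1 w' v) = (fun w' => sat pi cnd a2 w' v)).
    { apply pext; intro w'. destruct (IHHp w' v); split; auto. }
    rewrite E. split; auto.
  - simpl in *. apply c_mono; try exact (hGood _ v).
    intros w'; apply IHHp.
Qed.
End Sound.

Section Pref.
Variables (W : Type) (prec : W -> W -> Prop).
Hypothesis hpo : strict_po prec.

Lemma ptrans a b c : prec a b -> prec b c -> prec a c.
Proof. destruct hpo as [_ T]; eauto. Qed.

Lemma pleq_trans a b c : (prec a b \/ a = b) -> (prec b c \/ b = c) -> (prec a c \/ a = c).
Proof. intros [H1|H1] [H2|H2]; subst; eauto using ptrans. Qed.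

Lemma pref_empty A B : isempty A -> pref_cond prec A B.
Proof. intros H w1 Hw1. exfalso; eapply H; eauto. Qed.

Lemma pref_1 A : pref_cond prec A A.
Proof. intros w1 H. exists w1; auto. Qed.

Lemma pref_2 A B1 B2 : pref_cond prec A B1 -> pref_cond prec A B2 ->
  pref_cond prec A (fun w => B1 w /\ B2 w).
Proof.
  intros H1 H2 w1 Hw1.
  destruct (H1 w1 Hw1) as (w2 & L2 & [A2 B12] & Bel2).
  destruct (H2 w2 A2) as (w4 & L4 & [A4 B24] & Bel4).
  exists w4. split; [eapply pleq_trans; eauto|]. split.
  - split; auto. split; auto. destruct L4 as [L4|L4]; [apply Bel2; auto|subst; auto].
  - intros w3 H3 HA3. split; auto. apply Bel2; auto.
    destruct L4 as [L4|L4]; [eapply ptrans; eauto|subst; auto].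
Qed.

Lemma pref_3 A1 A2 B : pref_cond prec A1 B -> pref_cond prec A2 B ->
  pref_cond prec (fun w => A1 w \/ A2 w) B.
Proof.
  assert (Gen : forall A1 A2, pref_cond prec A1 B -> pref_cond prec A2 B ->
     forall w1, A1 w1 -> exists w2, (prec w2 w1 \/ w2 = w1) /\ ((A1 w2 \/ A2 w2) /\ B w2) /\
      (forall w3, prec w3 w2 -> (A1 w3 \/ A2 w3) -> B w3)).
  { clear A1 A2. intros A1 A2 H1 H2 w1 Hw1.
    destruct (H1 w1 Hw1) as (w2 & L2 & [HA2 HB2] & Bel2).
    destruct (classic (exists w3, prec w3 w2 /\ A2 w3 /\ ~ B w3)) as [[w3 (L3 & HA3 & HB3)]|Hn].
    - destruct (H2 w3 HA3) as (w4 & L4 & [HA4 HB4] & Bel4).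
      assert (L42 : prec w4 w2) by (destruct L4; subst; eauto using ptrans).
      exists w4. refine (conj _ (conj (conj (or_intror HA4) HB4) _)).
      { left. destruct L2 as [L2|L2]; [eapply ptrans; eauto|subst; auto]. }
      intros w5 L5 [HA5|HA5]; [apply Bel2; eauto using ptrans| apply Bel4; auto].
    - exists w2. split; auto. split; auto.
      intros w5 L5 [HA5|HA5]; [apply Bel2; auto|].
      apply NNPP; intro HB5; apply Hn; eauto. }
  intros H1 H2 w1 [Hw1|Hw1].
  - apply Gen; auto.
  - destruct (Gen A2 A1 H2 H1 w1 Hw1) as (w2 & L & [HA HB] & Bel).
    exists w2. split; auto. split; [split; tauto|]. intros w3 L3 HA3; apply Bel; tauto.
Qed.

Lemma pref_4 A B C : pref_cond prec A B -> pref_cond prec A C ->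
  pref_cond prec (fun w => A w /\ B w) C.
Proof.
  intros H1 H2 w1 [HA1 HB1].
  destruct (H2 w1 HA1) as (w2 & L2 & [HA2 HC2] & Bel2).
  destruct (H1 w2 HA2) as (w4 & L4 & [HA4 HB4] & Bel4).
  exists w4. split; [eapply pleq_trans; eauto|].
  assert (Bel : forall w3, prec w3 w4 -> A w3 -> C w3).
  { intros w3 L3 HA3. apply Bel2; auto. destruct L4; subst; eauto using ptrans. }
  split.
  - split; [split; auto|]. destruct L4 as [L4|L4]; [apply Bel2; auto|subst; auto].
  - intros w3 L3 [HA3 _]; auto.
Qed.

Lemma pref_mono A B1 B2 : (forall w, B1 w -> B2 w) -> pref_cond prec A B1 -> pref_cond prec A B2.
Proof.
  intros Hm H w1 Hw1. destruct (H w1 Hw1) as (w2 & L & [HA HB] & Bel).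
  exists w2; split; auto.
Qed.
End Pref.

Ltac rmax := repeat match goal with
 | H: context[Rmax ?a ?b] |- _ =>
     let h := fresh "h" in destruct (Rle_dec a b) as [h|h];
     [rewrite (Rmax_right a b) in * by lra | rewrite (Rmax_left a b) in * by lra]
 | |- context[Rmax ?a ?b] =>
     let h := fresh "h" in destruct (Rle_dec a b) as [h|h];
     [rewrite (Rmax_right a b) in * by lra | rewrite (Rmax_left a b) in * by lra]
 end.

Section Rank.
Variables (W : Type) (r : (W -> Prop) -> R).
Hypothesis r_nonneg : forall A, (0 <= r A)%R.
Hypothesis r_empty : forall A, isempty A -> r A = 0%R.
Hypothesis r_union0 : forall A B, r (fun w => A w \/ B w) = Rmax (r A) (r B).

Lemma r_ext A B : (forall w, A w <-> B w) -> r A = r B.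
Proof. intro H. rewrite (pext H). reflexivity. Qed.

Lemma r_union A B C : (forall w, C w <-> A w \/ B w) -> r C = Rmax (r A) (r B).
Proof. intro H. rewrite (r_ext _ _ H). apply r_union0. Qed.

Lemma r_mono A B : (forall w, A w -> B w) -> (r A <= r B)%R.
Proof. intro H. rewrite (r_union A B B). apply Rmax_l. intro w; split; auto. intros [h|h]; auto. Qed.

Lemma rk_empty A B : isempty A -> poss_cond r A B.
Proof. intro H; left; auto. Qed.

Lemma rk_1 A : poss_cond r A A.
Proof.
  unfold poss_cond. rewrite (r_empty (fun w => A w /\ ~ A w)) by (intros w [h1 h2]; auto).
  rewrite (r_ext (fun w => A w /\ A w) A) by (intro; tauto).
  pose proof (r_nonneg A). destruct (Req_dec (r A) 0); [left|right]; auto; lra.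
Qed.

Lemma rk_2 A B1 B2 : poss_cond r A B1 -> poss_cond r A B2 -> poss_cond r A (fun w => B1 w /\ B2 w).
Proof.
  unfold poss_cond. cbv beta. intros H1 H2.
  set (X1 := fun w => A w /\ B1 w /\ B2 w). set (X2 := fun w => A w /\ B1 w /\ ~ B2 w).
  set (X3 := fun w => A w /\ ~ B1 w /\ B2 w). set (X4 := fun w => A w /\ ~ B1 w /\ ~ B2 w).
  assert (E1 : r (fun w => A w /\ B1 w) = Rmax (r X1) (r X2)) by
    (apply r_union; intro w; unfold X1, X2; destruct (classic (B2 w)); tauto).
  assert (E2 : r (fun w => A w /\ ~ B1 w) = Rmax (r X3) (r X4)) by
    (apply r_union; intro w; unfold X3, X4; destruct (classic (B2 w)); tauto).
  assert (E3 : r (fun w => A w /\ B2 w) = Rmax (r X1) (r X3)) by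
    (apply r_union; intro w; unfold X1, X3; destruct (classic (B1 w)); tauto).
  assert (E4 : r (fun w => A w /\ ~ B2 w) = Rmax (r X2) (r X4)) by
    (apply r_union; intro w; unfold X2, X4; destruct (classic (B1 w)); tauto).
  assert (E5 : r (fun w => A w /\ ~ (B1 w /\ B2 w)) = Rmax (r X2) (r (fun w => X3 w \/ X4 w))) by
    (apply r_union; intro w; unfold X2, X3, X4; destruct (classic (B1 w)), (classic (B2 w)); tauto).
  rewrite (r_union0 X3 X4) in E5.
  assert (E6 : r (fun w => A w /\ (B1 w /\ B2 w)) = r X1) by (apply r_ext; intro w; unfold X1; tauto).
  rewrite E1, E2 in H1. rewrite E3, E4 in H2. rewrite E5.
  destruct H1 as [H1|H1]; [left; auto|]. destruct H2 as [H2|H2]; [left; auto|].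
  right. pose proof (r_nonneg X1). pose proof (r_nonneg X2). pose proof (r_nonneg X3). pose proof (r_nonneg X4).
  rmax; lra.
Qed.

Lemma rk_3 A1 A2 B : poss_cond r A1 B -> poss_cond r A2 B -> poss_cond r (fun w => A1 w \/ A2 w) B.
Proof.
  unfold poss_cond. cbv beta. intros H1 H2.
  assert (E1 : r A1 = Rmax (r (fun w => A1 w /\ B w)) (r (fun w => A1 w /\ ~ B w))) by
    (apply r_union; intro w; destruct (classic (B w)); tauto).
  assert (E2 : r A2 = Rmax (r (fun w => A2 w /\ B w)) (r (fun w => A2 w /\ ~ B w))) by
    (apply r_union; intro w; destruct (classic (B w)); tauto).
  assert (E3 : r (fun w => (A1 w \/ A2 w) /\ B w) = Rmax (r (fun w => A1 w /\ B w)) (r (fun w => A2 w /\ B w))) by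
    (apply r_union; intro w; tauto).
  assert (E4 : r (fun w => (A1 w \/ A2 w) /\ ~ B w) = Rmax (r (fun w => A1 w /\ ~ B w)) (r (fun w => A2 w /\ ~ B w))) by
    (apply r_union; intro w; tauto).
  rewrite r_union0, E3, E4. rewrite E1 in H1 |- *. rewrite E2 in H2 |- *.
  pose proof (r_nonneg (fun w => A1 w /\ B w)). pose proof (r_nonneg (fun w => A1 w /\ ~ B w)).
  pose proof (r_nonneg (fun w => A2 w /\ B w)). pose proof (r_nonneg (fun w => A2 w /\ ~ B w)).
  destruct H1 as [H1|H1], H2 as [H2|H2]; rmax; try (left; lra); right; lra.
Qed.

Lemma rk_4 A B C : poss_cond r A B -> poss_cond r A C -> poss_cond r (fun w => A w /\ B w) C.
Proof.
  unfold poss_cond. cbv beta. intros H1 H2.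
  set (X1 := fun w => A w /\ B w /\ C w). set (X2 := fun w => A w /\ B w /\ ~ C w).
  set (X3 := fun w => A w /\ ~ B w /\ C w). set (X4 := fun w => A w /\ ~ B w /\ ~ C w).
  assert (E1 : r (fun w => A w /\ B w) = Rmax (r X1) (r X2)) by
    (apply r_union; intro w; unfold X1, X2; destruct (classic (C w)); tauto).
  assert (E2 : r (fun w => A w /\ ~ B w) = Rmax (r X3) (r X4)) by
    (apply r_union; intro w; unfold X3, X4; destruct (classic (C w)); tauto).
  assert (E3 : r (fun w => A w /\ C w) = Rmax (r X1) (r X3)) by
    (apply r_union; intro w; unfold X1, X3; destruct (classic (B w)); tauto).
  assert (E4 : r (fun w => A w /\ ~ C w) = Rmax (r X2) (r X4)) by
    (apply r_union; intro w; unfold X2, X4; destruct (classic (B w)); tauto).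
  assert (E0 : r A = Rmax (r (fun w => A w /\ B w)) (r (fun w => A w /\ ~ B w))) by
    (apply r_union; intro w; destruct (classic (B w)); tauto).
  assert (E5 : r (fun w => (A w /\ B w) /\ ~ C w) = r X2) by (apply r_ext; intro w; unfold X2; tauto).
  assert (E6 : r (fun w => (A w /\ B w) /\ C w) = r X1) by (apply r_ext; intro w; unfold X1; tauto).
  rewrite E1, E2 in E0. rewrite E0, E1, E2 in H1. rewrite E0, E3, E4 in H2. rewrite E1, E5, E6.
  pose proof (r_nonneg X1). pose proof (r_nonneg X2). pose proof (r_nonneg X3). pose proof (r_nonneg X4).
  destruct H1 as [H1|H1], H2 as [H2|H2]; rmax; try (left; lra); right; lra.
Qed.

Lemma rk_mono A B1 B2 : (forall w, B1 w -> B2 w) -> poss_cond r A B1 -> poss_cond r A B2.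
Proof.
  unfold poss_cond. intros Hm [H|H]; [left; auto|right].
  pose proof (r_mono (fun w => A w /\ ~ B2 w) (fun w => A w /\ ~ B1 w)).
  pose proof (r_mono (fun w => A w /\ B1 w) (fun w => A w /\ B2 w)).
  assert ((r (fun w => A w /\ ~ B2 w) <= r (fun w => A w /\ ~ B1 w))%R) by (apply H0; intros w [h1 h2]; split; auto).
  assert ((r (fun w => A w /\ B1 w) <= r (fun w => A w /\ B2 w))%R) by (apply H1; intros w [h1 h2]; split; auto).
  lra.
Qed.
End Rank.

Section LubRank.
Variables (W : Type) (r : (W -> Prop) -> R).
Hypothesis r_nonneg : forall A, (0 <= r A)%R.
Hypothesis r_empty : forall A, isempty A -> r A = 0%R.
Hypothesis r_lub : forall A, (exists w, A w) ->
  is_lub (fun x => exists w, A w /\ x = r (sing w)) (r A).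

Lemma lub_union0 A B : r (fun w => A w \/ B w) = Rmax (r A) (r B).
Proof.
  destruct (classic (exists w, A w \/ B w)) as [Hne|He].
  - apply (is_lub_u _ _ _ (r_lub _ Hne)). split.
    + intros x [w [[Hw|Hw] ->]].
      * eapply Rle_trans; [|apply Rmax_l]. apply (r_lub A (ex_intro _ w Hw)). eauto.
      * eapply Rle_trans; [|apply Rmax_r]. apply (r_lub B (ex_intro _ w Hw)). eauto.
    + intros u Hu.
      assert (u0 : (0 <= u)%R).
      { destruct Hne as [w Hw]. eapply Rle_trans; [apply (r_nonneg (sing w))|]. apply Hu. eauto. }
      apply Rmax_lub.
      * destruct (classic (exists w, A w)) as [HA|HA].
        -- apply (r_lub A HA). intros x [w [Hw ->]]. apply Hu; eauto.
        -- rewrite r_empty; auto. intros w Hw; apply HA; eauto.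
      * destruct (classic (exists w, B w)) as [HB|HB].
        -- apply (r_lub B HB). intros x [w [Hw ->]]. apply Hu; eauto.
        -- rewrite r_empty; auto. intros w Hw; apply HB; eauto.
  - rewrite !r_empty; try (intros w Hw; apply He; eauto).
    rewrite Rmax_left; lra.
Qed.
End LubRank.

Definition gk (o : option nat) : R := match o with None => 0%R | Some n => (/ (INR n + 1))%R end.

Lemma gk_pos n : (0 < gk (Some n))%R.
Proof. simpl. apply Rinv_0_lt_compat. pose proof (pos_INR n). lra. Qed.

Lemma gk_nonneg o : (0 <= gk o)%R.
Proof. destruct o; [apply Rlt_le, gk_pos|simpl; lra]. Qed.

Lemma gk_kle a b : kle a b -> (gk b <= gk a)%R.
Proof.
  destruct a as [m|], b as [n|]; simpl; intros H; try lra; try contradiction.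
  - apply Rinv_le_contravar. pose proof (pos_INR m); lra. apply le_INR in H; lra.
  - apply Rlt_le. apply (gk_pos m).
Qed.

Lemma gk_klt a b : klt a b <-> (gk b < gk a)%R.
Proof.
  destruct a as [m|], b as [n|]; simpl.
  - split; intros H.
    + apply Rinv_lt_contravar. pose proof (pos_INR m); pose proof (pos_INR n); nra.
      apply lt_INR in H; lra.
    + destruct (Nat.lt_ge_cases m n) as [h|h]; auto. exfalso.
      assert (/ (INR m + 1) <= / (INR n + 1))%R. { apply Rinv_le_contravar. pose proof (pos_INR n); lra. apply le_INR in h; lra. }
      lra.
  - split; auto. intros _. apply (gk_pos m).
  - split; [contradiction|]. pose proof (gk_pos n). simpl in H. lra.
  - split; [contradiction|lra].
Qed.

Lemma gk_zero o : gk o = 0%R <-> o = None.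
Proof. destruct o; split; intros H; auto; try discriminate. pose proof (gk_pos n); lra. Qed.

Section KappaInst.
Variables (W : Type) (k : (W -> Prop) -> option nat).
Hypothesis hk : is_kappa k.

Lemma kappa_as_poss : kappa_cond k = poss_cond (fun A => gk (k A)).
Proof.
  apply functional_extensionality; intro A. apply functional_extensionality; intro B.
  apply propositional_extensionality. unfold kappa_cond, poss_cond.
  rewrite gk_zero, gk_klt. tauto.
Qed.

Lemma kappa_lub A : (exists w, A w) ->
  is_lub (fun x => exists w, A w /\ x = gk (k (sing w))) (gk (k A)).
Proof.
  intros Hne. destruct hk as (_ & _ & H). destruct (H A Hne) as [[w0 [Hw0 E]] Hmin]. split.
  - intros x [w [Hw ->]]. apply gk_kle, Hmin, Hw.
  - intros u Hu. rewrite E. apply Hu. eauto.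
Qed.

Lemma kappa_empty A : isempty A -> gk (k A) = 0%R.
Proof. intro H. destruct hk as (_ & H2 & _). rewrite (H2 A H). reflexivity. Qed.
End KappaInst.

Lemma div_le_l a b c : (0 < b)%R -> (a <= c * b)%R -> (a / b <= c)%R.
Proof. intros Hb H. unfold Rdiv. pose proof (Rinv_0_lt_compat b Hb).
  replace c with (c * b * / b)%R by (field; lra). apply Rmult_le_compat_r; lra. Qed.
Lemma div_nonneg a b : (0 <= a)%R -> (0 < b)%R -> (0 <= a / b)%R.
Proof. intros Ha Hb. unfold Rdiv. pose proof (Rinv_0_lt_compat b Hb). nra. Qed.

Section Prob.
Variables (W : Type) (Alg : (W -> Prop) -> Prop) (P : (W -> Prop) -> R).
Hypothesis hA : is_algebra Alg.
Hypothesis hP : is_prob_on Alg P.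

Lemma alg_ext A B : Alg A -> (forall w, A w <-> B w) -> Alg B.
Proof. intros H E. rewrite <- (pext E). exact H. Qed.

Lemma P_ext A B : (forall w, A w <-> B w) -> P A = P B.
Proof. intros E. rewrite (pext E). reflexivity. Qed.

Lemma alg_compl A : Alg A -> Alg (fun w => ~ A w).
Proof. destruct hA as (_ & H & _); auto. Qed.

Lemma alg_union A B : Alg A -> Alg B -> Alg (fun w => A w \/ B w).
Proof. destruct hA as (_ & _ & H); auto. Qed.

Lemma alg_inter A B : Alg A -> Alg B -> Alg (fun w => A w /\ B w).
Proof.
  intros HA HB. apply (alg_ext (fun w => ~ (~ A w \/ ~ B w))).
  - apply alg_compl, alg_union; apply alg_compl; auto.
  - intro w; destruct (classic (A w)), (classic (B w)); tauto.
Qed.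

Lemma alg_diff A B : Alg A -> Alg B -> Alg (fun w => A w /\ ~ B w).
Proof. intros; apply alg_inter; auto; apply alg_compl; auto. Qed.

Lemma alg_false : Alg (fun _ => False).
Proof.
  apply (alg_ext (fun w => ~ @setT W w)). apply alg_compl. destruct hA; auto.
  intro w; unfold setT; tauto.
Qed.

Lemma P_nonneg A : Alg A -> (0 <= P A)%R.
Proof. destruct hP as (H & _); auto. Qed.

Lemma P_false : P (fun _ => False) = 0%R.
Proof.
  destruct hP as (_ & _ & H).
  specialize (H (fun _ _ => False) (fun _ => alg_false) (fun m n w _ h _ => h)).
  cbv beta in H.
  assert (EE : forall w : W, (exists n : nat, False) <-> False) by (intro w; split; [intros [_ h]; auto|intros h; contradiction]).
  specialize (H (alg_ext _ _ alg_false (fun w => iff_sym (EE w)))).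
  rewrite (P_ext _ _ EE) in H.
  set (c := P (fun _ => False)) in *.
  destruct (Req_dec c 0) as [h|h]; auto. exfalso.
  assert (Hc : (Rabs c > 0)%R) by (apply Rabs_pos_lt; auto).
  destruct (H (Rabs c) Hc) as [N HN]. specialize (HN (S N) (le_S _ _ (le_n N))).
  unfold R_dist in HN. rewrite sum_cte in HN.
  replace (c * INR (S (S N)) - c)%R with (c * INR (S N))%R in HN by (rewrite (S_INR (S N)); ring).
  rewrite Rabs_mult, (Rabs_right (INR (S N))) in HN by (apply Rle_ge, pos_INR).
  rewrite S_INR in HN. pose proof (pos_INR N). nra.
Qed.

Lemma P_empty A : isempty A -> P A = 0%R.
Proof. intro H. rewrite (P_ext A (fun _ => False)); [apply P_false|]. intro w; split; [apply H|contradiction]. Qed.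

Lemma P_add A B : Alg A -> Alg B -> (forall w, A w -> B w -> False) ->
  P (fun w => A w \/ B w) = (P A + P B)%R.
Proof.
  intros HA HB Hd.
  set (F := fun n : nat => match n with 0 => A | 1 => B | _ => (fun _ : W => False) end).
  destruct hP as (_ & _ & H).
  assert (HF : forall n, Alg (F n)) by (intros [|[|n]]; simpl; auto using alg_false).
  assert (Hdis : forall m n w, m <> n -> F m w -> F n w -> False).
  { intros [|[|m]] [|[|n]] w Hmn; simpl; try tauto; intros; eauto. }
  assert (EU : forall w, (exists n, F n w) <-> A w \/ B w).
  { intro w; split. intros [[|[|n]] h]; simpl in h; tauto.
    intros [h|h]; [exists 0%nat|exists 1%nat]; auto. }
  specialize (H F HF Hdis (alg_ext _ _ (alg_union _ _ HA HB) (fun w => iff_sym (EU w)))).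
  rewrite (P_ext _ _ EU) in H.
  apply (UL_sequence _ _ _ H).
  intros eps Heps. exists 1%nat. intros n Hn. unfold R_dist.
  assert (Hs : forall m, sum_f_R0 (fun k => P (F k)) (S m) = (P A + P B)%R).
  { induction m; simpl; auto. simpl in IHm. rewrite IHm. rewrite P_false. ring. }
  destruct n; [lia|]. rewrite Hs. rewrite Rminus_diag, Rabs_R0. auto.
Qed.

Lemma P_split A B : Alg A -> Alg B -> P A = (P (fun w => A w /\ B w) + P (fun w => A w /\ ~ B w))%R.
Proof.
  intros HA HB. rewrite <- (P_add _ _ (alg_inter A B HA HB) (alg_diff A B HA HB)).
  - apply P_ext; intro w; destruct (classic (B w)); tauto.
  - intros w [] []; auto.
Qed.

Lemma P_mono A B : Alg A -> Alg B -> (forall w, A w -> B w) -> (P A <= P B)%R.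
Proof.
  intros HA HB Hs. rewrite (P_split B A HB HA).
  rewrite (P_ext (fun w => B w /\ A w) A) by (intro w; split; [tauto|intro; split; auto]).
  pose proof (P_nonneg _ (alg_diff _ _ HB HA)). lra.
Qed.

Lemma P_le1 A : Alg A -> (P A <= 1)%R.
Proof.
  intro HA. destruct hP as (_ & H1 & _). rewrite <- H1. apply P_mono; auto.
  destruct hA; auto. intros; exact I.
Qed.

Lemma P_subadd A B : Alg A -> Alg B -> (P (fun w => A w \/ B w) <= P A + P B)%R.
Proof.
  intros HA HB.
  rewrite (P_ext _ (fun w => A w \/ (B w /\ ~ A w))) by (intro w; destruct (classic (A w)); tauto).
  rewrite P_add; auto using alg_diff. 2: intros w h [_ h']; auto.
  pose proof (P_mono (fun w => B w /\ ~ A w) B (alg_diff _ _ HB HA) HB (fun w h => proj1 h)). lra.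
Qed.

Definition eP (A B : W -> Prop) : R :=
  if Req_EM_T (P A) 0 then 0%R else (P (fun w => A w /\ ~ B w) / P A)%R.

Lemma cprob_eP A B : Alg A -> Alg B -> cprob P B A = (1 - eP A B)%R.
Proof.
  intros HA HB. unfold cprob, eP. destruct (Req_EM_T (P A) 0) as [h|h]; [ring|].
  pose proof (P_split A B HA HB) as E.
  rewrite E in h |- *. field. auto.
Qed.

Lemma eP_nonneg A B : Alg A -> Alg B -> (0 <= eP A B)%R.
Proof.
  intros HA HB. unfold eP. destruct (Req_EM_T (P A) 0) as [h|h]; [lra|].
  pose proof (P_nonneg A HA). apply div_nonneg. apply P_nonneg, alg_diff; auto. lra.
Qed.

Lemma eP_bound X C c : Alg X -> Alg C -> (P X <> 0)%R -> (P (fun w => X w /\ ~ C w) <= c * P X)%R ->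
  (eP X C <= c)%R.
Proof.
  intros HX HC h Hb. unfold eP. destruct (Req_EM_T (P X) 0) as [h'|h']; [contradiction|].
  pose proof (P_nonneg X HX). apply div_le_l; auto. lra.
Qed.

Lemma eP_mul A B X : Alg A -> Alg B -> Alg X -> (forall w, A w -> X w) ->
  (P (fun w => A w /\ ~ B w) <= eP A B * P X)%R.
Proof.
  intros HA HB HX Hs. pose proof (P_mono _ _ HA HX Hs) as HAX.
  pose proof (P_mono (fun w => A w /\ ~ B w) A (alg_diff _ _ HA HB) HA (fun w h => proj1 h)) as HAB.
  pose proof (P_nonneg _ (alg_diff _ _ HA HB)) as HAB0.
  pose proof (eP_nonneg A B HA HB) as He.
  unfold eP in *. destruct (Req_EM_T (P A) 0) as [h|h].
  - lra.
  - pose proof (P_nonneg A HA).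
    set (x := P (fun w => A w /\ ~ B w)) in *. set (q := P A) in *.
    assert (Ex : x = (x / q * q)%R) by (field; auto).
    rewrite Ex at 1. apply Rmult_le_compat_l; lra.
Qed.

Lemma eP_zero A B : P A = 0%R -> eP A B = 0%R.
Proof. intro h. unfold eP. destruct (Req_EM_T (P A) 0); [auto|contradiction]. Qed.

Lemma eP_1 A : Alg A -> eP A A = 0%R.
Proof.
  intro HA. unfold eP. destruct (Req_EM_T (P A) 0); auto.
  rewrite P_empty. unfold Rdiv; ring. intros w [h1 h2]; auto.
Qed.

Lemma eP_2 A B1 B2 : Alg A -> Alg B1 -> Alg B2 ->
  (eP A (fun w => B1 w /\ B2 w) <= eP A B1 + eP A B2)%R.
Proof.
  intros HA H1 H2. destruct (Req_EM_T (P A) 0) as [h|h].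
  - rewrite !eP_zero; auto. lra.
  - apply eP_bound; auto using alg_inter.
    rewrite (P_ext _ (fun w => (A w /\ ~ B1 w) \/ (A w /\ ~ B2 w))) by (intro w; destruct (classic (B1 w)); tauto).
    eapply Rle_trans; [apply P_subadd; apply alg_diff; auto|].
    pose proof (eP_mul A B1 A HA H1 HA (fun w h => h)). pose proof (eP_mul A B2 A HA H2 HA (fun w h => h)). lra.
Qed.

Lemma eP_3 A1 A2 B : Alg A1 -> Alg A2 -> Alg B ->
  (eP (fun w => A1 w \/ A2 w) B <= eP A1 B + eP A2 B)%R.
Proof.
  intros H1 H2 HB. pose proof (eP_nonneg A1 B H1 HB). pose proof (eP_nonneg A2 B H2 HB).
  destruct (Req_EM_T (P (fun w => A1 w \/ A2 w)) 0) as [h|h].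
  - rewrite (eP_zero _ _ h). lra.
  - apply eP_bound; auto using alg_union.
    rewrite (P_ext _ (fun w => (A1 w /\ ~ B w) \/ (A2 w /\ ~ B w))) by (intro w; tauto).
    eapply Rle_trans; [apply P_subadd; apply alg_diff; auto|].
    pose proof (eP_mul A1 B _ H1 HB (alg_union _ _ H1 H2) (fun w h => or_introl h)).
    pose proof (eP_mul A2 B _ H2 HB (alg_union _ _ H1 H2) (fun w h => or_intror h)). lra.
Qed.

Lemma eP_4 A B C : Alg A -> Alg B -> Alg C -> (eP A B <= 1/2)%R ->
  (eP (fun w => A w /\ B w) C <= 2 * eP A C)%R.
Proof.
  intros HA HB HC Hh. pose proof (eP_nonneg A C HA HC).
  destruct (Req_EM_T (P (fun w => A w /\ B w)) 0) as [h|h].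
  - rewrite (eP_zero _ _ h). lra.
  - apply eP_bound; auto using alg_inter.
    pose proof (eP_mul A C A HA HC HA (fun w h => h)).
    pose proof (eP_mul A B A HA HB HA (fun w h => h)).
    pose proof (P_split A B HA HB).
    pose proof (P_mono (fun w => (A w /\ B w) /\ ~ C w) (fun w => A w /\ ~ C w)
      (alg_diff _ _ (alg_inter _ _ HA HB) HC) (alg_diff _ _ HA HC) (fun w h => conj (proj1 (proj1 h)) (proj2 h))).
    pose proof (P_nonneg A HA) as PA0.
    assert (K1 : (eP A B * P A <= 1/2 * P A)%R) by (apply Rmult_le_compat_r; lra).
    assert (K2 : (P A <= 2 * P (fun w => A w /\ B w))%R) by lra.
    assert (K3 : (eP A C * P A <= eP A C * (2 * P (fun w => A w /\ B w)))%R) by (apply Rmult_le_compat_l; lra).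
    lra.
Qed.

Lemma eP_mono A B1 B2 : Alg A -> Alg B1 -> Alg B2 -> (forall w, B1 w -> B2 w) ->
  (eP A B2 <= eP A B1)%R.
Proof.
  intros HA H1 H2 Hs. destruct (Req_EM_T (P A) 0) as [h|h].
  - rewrite !eP_zero; auto. lra.
  - apply eP_bound; auto.
    pose proof (eP_mul A B1 A HA H1 HA (fun w h => h)).
    pose proof (P_mono (fun w => A w /\ ~ B2 w) (fun w => A w /\ ~ B1 w) (alg_diff _ _ HA H2) (alg_diff _ _ HA H1)
      (fun w h => conj (proj1 h) (fun h1 => proj2 h (Hs w h1)))). lra.
Qed.

End Prob.

Section PPD.
Variables (W : Type) (Alg : (W -> Prop) -> Prop) (Pr : nat -> (W -> Prop) -> R).
Hypothesis hA : is_algebra Alg.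
Hypothesis hP : forall i, is_prob_on Alg (Pr i).

Definition ev (f : nat -> R) : Prop :=
  forall eps, (eps > 0)%R -> exists N, forall n, (n >= N)%nat -> (f n < eps)%R.

Lemma ppd_iff A B : Alg A -> Alg B -> (ppd_cond Pr A B <-> ev (fun n => eP W (Pr n) A B)).
Proof.
  intros HA HB. unfold ppd_cond, Un_cv, ev, R_dist.
  assert (E : forall n, Rabs (cprob (Pr n) B A - 1) = eP W (Pr n) A B).
  { intro n. rewrite (cprob_eP W Alg (Pr n) hA (hP n) A B HA HB).
    replace (1 - eP W (Pr n) A B - 1)%R with (- eP W (Pr n) A B)%R by ring.
    rewrite Rabs_Ropp. apply Rabs_right. apply Rle_ge, (eP_nonneg W Alg (Pr n) hA (hP n)); auto. }
  split; intros H eps He; destruct (H eps He) as [N HN]; exists N; intros n Hn;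
    specialize (HN n Hn); rewrite E in *; auto.
Qed.

Lemma ev_le (f g : nat -> R) c : (c > 0)%R -> (forall n, (0 <= f n)%R) ->
  (forall n, (f n <= c * g n)%R) -> ev g -> ev f.
Proof.
  intros Hc H0 H Hg eps He. destruct (Hg (eps / c)%R) as [N HN].
  { unfold Rdiv. pose proof (Rinv_0_lt_compat c Hc). nra. }
  exists N. intros n Hn. specialize (HN n Hn). specialize (H n).
  assert (c * g n < eps)%R.
  { replace eps with (c * (eps / c))%R by (field; lra). apply Rmult_lt_compat_l; lra. }
  lra.
Qed.

Lemma ev_add (f g : nat -> R) : ev f -> ev g -> ev (fun n => f n + g n)%R.
Proof.
  intros Hf Hg eps He. destruct (Hf (eps/2)%R) as [N1 H1]; [lra|]. destruct (Hg (eps/2)%R) as [N2 H2]; [lra|].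
  exists (max N1 N2). intros n Hn. specialize (H1 n ltac:(lia)). specialize (H2 n ltac:(lia)). lra.
Qed.

Lemma ev_const0 : ev (fun _ => 0%R).
Proof. intros eps He. exists 0%nat. intros; auto. Qed.

Lemma ppd_empty A B : Alg A -> Alg B -> isempty A -> ppd_cond Pr A B.
Proof.
  intros HA HB He. apply ppd_iff; auto. intros eps Heps. exists 0%nat. intros n _.
  rewrite eP_zero; auto. apply (P_empty W Alg (Pr n) hA (hP n)); auto.
Qed.

Lemma ppd_1 A : Alg A -> ppd_cond Pr A A.
Proof.
  intros HA. apply ppd_iff; auto. intros eps Heps. exists 0%nat. intros n _.
  rewrite (eP_1 W Alg (Pr n) hA (hP n)); auto.
Qed.

Lemma ppd_2 A B1 B2 : Alg A -> Alg B1 -> Alg B2 -> ppd_cond Pr A B1 -> ppd_cond Pr A B2 ->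
  ppd_cond Pr A (fun w => B1 w /\ B2 w).
Proof.
  intros HA H1 H2 C1 C2. pose proof (alg_inter W Alg hA B1 B2 H1 H2) as H12.
  apply (ppd_iff A _ HA H12). apply (ppd_iff A _ HA H1) in C1. apply (ppd_iff A _ HA H2) in C2.
  apply (ev_le _ (fun n => eP W (Pr n) A B1 + eP W (Pr n) A B2)%R 1 ltac:(lra)).
  - intro n; apply (eP_nonneg W Alg (Pr n) hA (hP n)); auto.
  - intro n. rewrite Rmult_1_l. apply (eP_2 W Alg (Pr n) hA (hP n)); auto.
  - apply ev_add; auto.
Qed.

Lemma ppd_3 A1 A2 B : Alg A1 -> Alg A2 -> Alg B -> ppd_cond Pr A1 B -> ppd_cond Pr A2 B ->
  ppd_cond Pr (fun w => A1 w \/ A2 w) B.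
Proof.
  intros H1 H2 HB C1 C2. pose proof (alg_union W Alg hA A1 A2 H1 H2) as H12.
  apply (ppd_iff _ B H12 HB). apply (ppd_iff _ B H1 HB) in C1. apply (ppd_iff _ B H2 HB) in C2.
  apply (ev_le _ (fun n => eP W (Pr n) A1 B + eP W (Pr n) A2 B)%R 1 ltac:(lra)).
  - intro n; apply (eP_nonneg W Alg (Pr n) hA (hP n)); auto.
  - intro n. rewrite Rmult_1_l. apply (eP_3 W Alg (Pr n) hA (hP n)); auto.
  - apply ev_add; auto.
Qed.

Lemma ppd_4 A B C : Alg A -> Alg B -> Alg C -> ppd_cond Pr A B -> ppd_cond Pr A C ->
  ppd_cond Pr (fun w => A w /\ B w) C.
Proof.
  intros HA HB HC C1 C2. pose proof (alg_inter W Alg hA A B HA HB) as HAB.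
  apply (ppd_iff _ C HAB HC). apply (ppd_iff A _ HA HB) in C1. apply (ppd_iff A _ HA HC) in C2.
  destruct (C1 (1/2)%R ltac:(lra)) as [N HN].
  intros eps He. destruct (C2 (eps/2)%R ltac:(lra)) as [N2 HN2].
  exists (max N N2). intros n Hn.
  pose proof (eP_4 W Alg (Pr n) hA (hP n) A B C HA HB HC ltac:(specialize (HN n ltac:(lia)); lra)).
  specialize (HN2 n ltac:(lia)). lra.
Qed.

Lemma ppd_mono A B1 B2 : Alg A -> Alg B1 -> Alg B2 -> (forall w, B1 w -> B2 w) ->
  ppd_cond Pr A B1 -> ppd_cond Pr A B2.
Proof.
  intros HA H1 H2 Hs C1. apply (ppd_iff A _ HA H2). apply (ppd_iff A _ HA H1) in C1.
  apply (ev_le _ (fun n => eP W (Pr n) A B1) 1 ltac:(lra)).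
  - intro n; apply (eP_nonneg W Alg (Pr n) hA (hP n)); auto.
  - intro n. rewrite Rmult_1_l. apply (eP_mono W Alg (Pr n) hA (hP n)); auto.
  - auto.
Qed.
End PPD.

Lemma pref_valid (S : vocab) (a : form S) : provable a -> valid_pref a.
Proof.
  intros Hp D W pi prec _ Hpo w v.
  refine (provable_sound S D W pi (pref_cond prec) (fun _ => True) (fun _ _ => I) _ _ _ _ _ _ a Hp w v).
  - intros; apply pref_empty; auto.
  - intros; apply pref_1.
  - intros; apply pref_2; auto.
  - intros; apply pref_3; auto.
  - intros; apply pref_4; auto.
  - intros; eapply pref_mono; eauto.
Qed.

Lemma rank_valid (S : vocab) (a : form S) (D W : Type) (pi : W -> interp S D) (r : (W -> Prop) -> R) :
  (forall A, 0 <= r A)%R -> (forall A, isempty A -> r A = 0%R) ->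
  (forall A B, r (fun w => A w \/ B w) = Rmax (r A) (r B)) ->
  provable a -> forall w v, sat pi (poss_cond r) a w v.
Proof.
  intros H1 H2 H3 Hp w v.
  refine (provable_sound S D W pi (poss_cond r) (fun _ => True) (fun _ _ => I) _ _ _ _ _ _ a Hp w v).
  - intros; apply rk_empty; auto.
  - intros; eapply rk_1; eauto.
  - intros; eapply rk_2; eauto.
  - intros; eapply rk_3; eauto.
  - intros; eapply rk_4; eauto.
  - intros; eapply rk_mono; eauto.
Qed.

Lemma ppd_valid (S : vocab) (a : form S) : provable a -> valid_ppd a.
Proof.
  intros Hp D W pi Alg Pr _ hA hP hG w v.
  refine (provable_sound S D W pi (ppd_cond Pr) Alg hG _ _ _ _ _ _ a Hp w v).
  - intros; apply (ppd_empty W Alg Pr hA hP); auto.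
  - intros; apply (ppd_1 W Alg Pr hA hP); auto.
  - intros; apply (ppd_2 W Alg Pr hA hP); auto.
  - intros; apply (ppd_3 W Alg Pr hA hP); auto.
  - intros; apply (ppd_4 W Alg Pr hA hP); auto.
  - intros A0 B1 B2 HA0 HB1 HB2 Hs C0; apply (ppd_mono W Alg Pr hA hP A0 B1 B2); auto.
Qed.

Theorem theorem5p1 (S : vocab) (a : form S) :
  provable a ->
  valid_wf_pref a /\ valid_pref a /\ valid_kappa a /\ valid_poss a /\ valid_ppd a.
Proof.
  intros Hp. split; [|split; [|split; [|split]]].
  - intros D W pi prec HD Hpo _ w v. apply (pref_valid S a Hp D W pi prec HD Hpo).
  - apply pref_valid; auto.
  - intros D W pi k _ hk w v. rewrite (kappa_as_poss W k).
    apply rank_valid; auto.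
    + intro A; apply gk_nonneg.
    + intros A HA; apply (kappa_empty W k hk A HA).
    + intros A B. apply (lub_union0 W (fun X => gk (k X))).
      * intro; apply gk_nonneg.
      * intros X HX; apply (kappa_empty W k hk X HX).
      * intros X HX; apply (kappa_lub W k hk X HX).
  - intros D W pi Poss _ hp w v. destruct hp as (h1 & h2 & h3 & h4).
    apply rank_valid; auto.
    + intro A; apply h1.
    + intros A B. apply (lub_union0 W Poss); auto. intro; apply h1.
  - apply ppd_valid; auto.
Qed.
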